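(* Let $X=X(\Delta)$ be a smooth complete toric variety. If $\mathcal{I}_1\ne\mathcal{I}_2$ are two centred primitive collections of $\Delta$, then $\mathcal{I}_1\cap\mathcal{I}_2=\varnothing$.
   Context: Rays of $\Delta$ are identified with their primitive generators. A primitive collection is a set $\mathcal{I}$ of rays whose members do not generate a cone of $\Delta$ while the members of each proper subset do; it is centred if $\sum_{\rho\in\mathcal{I}}\rho=0$. *)

(* Defs.v *)
From HB Require Import structures.
From mathcomp Require Import all_boot all_order all_algebra.
From mathcomp Require Import reals.
Set Implicit Arguments. Unset Strict Implicit. Unset Printing Implicit Defensive.
Import Order.TTheory GRing.Theory Num.Theory.
Local Open Scope ring_scope.

(* A fan Delta in N_R = R^n, N = Z^n, with m rays.  Ray i is identified with
   its primitive generator v i : 'rV[int]_n.  The cones of Delta are indexed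
   by the subsets sigma of 'I_m in S; the cone of sigma is the real cone
   generated by the v i, i \in sigma. *)

Definition realv (R : realType) n (u : 'rV[int]_n) : 'rV[R]_n :=
  map_mx (fun z : int => z%:~R) u.

Definition in_cone (R : realType) n m (v : 'I_m -> 'rV[int]_n)
    (A : {set 'I_m}) (x : 'rV[R]_n) : Prop :=
  exists c : 'I_m -> R,
    (forall i, 0 <= c i) /\ (forall i, i \notin A -> c i = 0) /\
    x = \sum_(i < m) c i *: realv R (v i).

Definition part_of_Zbasis n m (v : 'I_m -> 'rV[int]_n) (A : {set 'I_m}) : Prop :=
  exists (B : 'M[int]_n) (g : 'I_m -> 'I_n),
    B \in unitmx /\ {in A &, injective g} /\ (forall i, i \in A -> row (g i) B = v i).

Definition smooth_complete_fan (R : realType) n m (v : 'I_m -> 'rV[int]_n)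
    (S : {set {set 'I_m}}) : Prop :=
  [/\ injective v /\ (forall i, [set i] \in S), (* distinct rays, each spanning a ray of Delta *)
      (forall s t : {set 'I_m}, s \in S -> t \subset s -> t \in S),
      (forall (s t : {set 'I_m}) (x : 'rV[R]_n), s \in S -> t \in S ->             (* cones meet along common faces *)
          (in_cone v s x /\ in_cone v t x <-> in_cone v (s :&: t) x)),
      (forall s, s \in S -> part_of_Zbasis v s)
    & (forall x : 'rV[R]_n, exists2 s, s \in S & in_cone v s x) ].

Definition generates_cone (R : realType) n m (v : 'I_m -> 'rV[int]_n)
    (S : {set {set 'I_m}}) (A : {set 'I_m}) : Prop :=
  exists2 s, s \in S & forall x : 'rV[R]_n, in_cone v A x <-> in_cone v s x.

Definition primitive_collection (R : realType) n m (v : 'I_m -> 'rV[int]_n)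
    (S : {set {set 'I_m}}) (I : {set 'I_m}) : Prop :=
  ~ generates_cone R v S I /\
  (forall J : {set 'I_m}, J \proper I -> generates_cone R v S J).

Definition centred n m (v : 'I_m -> 'rV[int]_n) (I : {set 'I_m}) : Prop :=
  \sum_(i in I) v i = 0.

(* Main.v *)
Require Import Defs.
From HB Require Import structures.
From mathcomp Require Import all_boot all_order all_algebra.
From mathcomp Require Import reals.
Import Order.TTheory GRing.Theory Num.Theory.
Local Open Scope ring_scope.

Lemma LI (R : realType) n m (v : 'I_m -> 'rV[int]_n) (s : {set 'I_m}) :
  part_of_Zbasis v s -> forall d : 'I_m -> R, (forall i, i \notin s -> d i = 0) ->
  \sum_i d i *: realv R (v i) = 0 -> forall i, d i = 0.
Proof.
move=> [B [g [Bu [ginj Brow]]]] d ds H.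
pose BR : 'M[R]_n := map_mx (fun z : int => z%:~R) B.
have BRu : BR \in unitmx.
  by rewrite unitmxE det_map_mx rmorph_unit // -unitmxE.
pose e : 'rV[R]_n := \row_k \sum_(i in s | g i == k) d i.
have eB : e *m BR = 0.
  rewrite -H mulmx_sum_row.
  under eq_bigr do rewrite mxE scaler_suml.
  rewrite (exchange_big_dep xpredT) //=.
  apply: eq_bigr => j _.
  case: (boolP (j \in s)) => sj /=.
    rewrite (big_pred1 (g j)); last by move=> k /=; rewrite eq_sym.
    by rewrite /BR -map_row Brow.
  by rewrite big_pred0 // ds // scale0r.
have e0 : e = 0 by rewrite -(mulmxK BRu e) eB mul0mx.
move=> i; case: (boolP (i \in s)) => si; last exact: ds.
have := congr1 (fun w : 'rV[R]_n => w 0 (g i)) e0.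
rewrite !mxE /= => <-.
rewrite (big_pred1 i) // => j /=.
apply/andP/eqP => [[sj /eqP gj]|->]; last by rewrite si eqxx.
exact: ginj.
Qed.

Definition ind (R : realType) {m} (A : {set 'I_m}) : 'I_m -> R :=
  fun j => if j \in A then 1 else 0.

Lemma sum_ind (R : realType) n m (v : 'I_m -> 'rV[int]_n) (A : {set 'I_m}) :
  \sum_(j in A) realv R (v j) = \sum_j ind R A j *: realv R (v j).
Proof.
rewrite big_mkcond; apply: eq_bigr => j _; rewrite /ind.
by case: (j \in A); rewrite ?scale1r ?scale0r.
Qed.

Lemma cone_sum (R : realType) n m (v : 'I_m -> 'rV[int]_n) (A : {set 'I_m}) :
  in_cone v A (\sum_(j in A) realv R (v j)).
Proof.
exists (ind R A); split; last split; last exact: sum_ind.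
  by move=> i; rewrite /ind; case: (i \in A).
by move=> i /negbTE; rewrite /ind => ->.
Qed.

Lemma uniqc (R : realType) n m (v : 'I_m -> 'rV[int]_n) (s : {set 'I_m}) :
  part_of_Zbasis v s -> forall c d : 'I_m -> R,
  (forall i, i \notin s -> c i = 0) -> (forall i, i \notin s -> d i = 0) ->
  \sum_i c i *: realv R (v i) = \sum_i d i *: realv R (v i) -> forall i, c i = d i.
Proof.
move=> sb c d cs ds E i; apply/eqP; rewrite -subr_eq0; apply/eqP.
apply: (@LI R n m v s sb (fun i => c i - d i)) => [j /[dup] /cs -> /ds ->|]; first by rewrite subrr.
under eq_bigr do rewrite scalerBl.
by rewrite sumrB E subrr.
Qed.

Arguments cone_sum R {n m}.
Arguments sum_ind R {n m}.
Lemma realv_sum (R : realType) n m (v : 'I_m -> 'rV[int]_n) (A : {set 'I_m}) :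
  realv R (\sum_(j in A) v j) = \sum_(j in A) realv R (v j).
Proof.
apply: (big_ind2 (fun a b => realv R a = b)).
- by apply/matrixP => i j; rewrite !mxE.
- by move=> a b c d <- <-; apply/matrixP => i j; rewrite !mxE intrD.
- by [].
Qed.

Lemma sub_gen (R : realType) n m (v : 'I_m -> 'rV[int]_n) (S : {set {set 'I_m}})
  (A s : {set 'I_m}) :
  smooth_complete_fan R v S -> s \in S ->
  (forall x : 'rV[R]_n, in_cone v A x <-> in_cone v s x) -> A \subset s.
Proof.
move=> [[vinj S1] _ Sint Sb _] sS E; apply/subsetP => j jA.
have xA : in_cone v A (realv R (v j)).
  have := cone_sum R v [set j]; rewrite big_set1.
  move=> [c [c0 [cs xe]]]; exists c; split => //; split => // i iA.
  by apply: cs; apply: contra iA; rewrite inE => /eqP ->.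
have xj : in_cone v [set j] (realv R (v j)) by have := cone_sum R v [set j]; rewrite big_set1.
have /(proj1 (Sint _ _ _ sS (S1 j))) := conj (proj1 (E _) xA) xj.
case: (boolP (j \in s)) => // /negbTE js [c [_ [cs xe]]].
have c0 : forall i, c i = 0.
  by move=> i; apply: cs; rewrite !inE; apply/andP => -[/[swap] /eqP -> ]; rewrite js.
have := @LI R n m v [set j] (Sb _ (S1 j)) (ind R [set j]).
have h : forall i, i \notin [set j] -> ind R [set j] i = 0.
  by move=> i /negbTE; rewrite /ind => ->.
move=> /(_ h); rewrite -sum_ind big_set1 xe big1 => [/(_ erefl j)|i _]; last by rewrite c0 scale0r.
by rewrite /ind set11 => /eqP; rewrite oner_eq0.
Qed.

Arguments sub_gen {R n m v S A s}.
Arguments uniqc {R n m v s} _ {c d}.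
Theorem lemma6p4 (R : realType) (n m : nat) (v : 'I_m -> 'rV[int]_n)
    (S : {set {set 'I_m}}) (I1 I2 : {set 'I_m}) :
  smooth_complete_fan R v S ->
  primitive_collection R v S I1 -> centred v I1 ->
  primitive_collection R v S I2 -> centred v I2 ->
  I1 <> I2 -> I1 :&: I2 = set0.
Proof.
move=> F [_ P1] C1 [_ P2] C2 ne; apply/eqP/set0Pn => -[i].
rewrite inE => /andP [i1 i2]; apply: ne.
have [s sS Es] := P1 _ (properD1 i1).
have [t tS Et] := P2 _ (properD1 i2).
have As := sub_gen F sS Es.
have Bt := sub_gen F tS Et.
have [[_ _] _ Sint Sb _] := F.
set A := I1 :\ i in As Es *; set B := I2 :\ i in Bt Et *.
have xy : \sum_(j in A) realv R (v j) = \sum_(j in B) realv R (v j).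
  have := congr1 (@realv R n) C1; have := congr1 (@realv R n) C2.
  rewrite !realv_sum (big_setD1 _ i1) (big_setD1 _ i2) /= => h2 h1.
  have z : @realv R n 0 = 0 by apply/matrixP => a b; rewrite !mxE.
  rewrite z in h1 h2; apply: (@addrI _ (realv R (v i))); by rewrite h1 h2.
have xs := proj1 (Es _) (cone_sum R v A).
have xt := proj1 (Et _) (cone_sum R v B).
rewrite -xy in xt.
have [c [c0 [cs xe]]] := proj1 (Sint _ _ _ sS tS) (conj xs xt).
have cs' : forall j, j \notin s -> c j = 0.
  by move=> j js; apply: cs; rewrite inE negb_and js.
have indA : forall j, j \notin s -> ind R A j = 0.
  by move=> j js; rewrite /ind; case: ifP => // jA; case/negP: js; apply: (subsetP As).
have eq1 := uniqc (Sb _ sS) indA cs' (etrans (esym (sum_ind R v A)) xe).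
have At : A \subset t.
  apply/subsetP => j jA; have := eq1 j; rewrite /ind jA.
  case: (boolP (j \in s :&: t)); first by rewrite inE => /andP [].
  by move/cs => -> /eqP; rewrite oner_eq0.
have ind0 : forall (C : {set 'I_m}), C \subset t -> forall j, j \notin t -> ind R C j = 0.
  by move=> C Ct j jt; rewrite /ind; case: ifP => // jC; case/negP: jt; apply: (subsetP Ct).
have eq2 := uniqc (Sb _ tS) (ind0 _ At) (ind0 _ Bt)
   (etrans (esym (sum_ind R v A)) (etrans xy (sum_ind R v B))).
have AB : A = B.
  apply/setP => j; have := eq2 j; rewrite /ind.
  by case: (j \in A); case: (j \in B) => // /eqP; rewrite ?oner_eq0 // eq_sym oner_eq0.
by rewrite -(setD1K i1) -(setD1K i2) -/A -/B AB.
Qed.
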